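(* For any polynomial $f(\rho)$ of degree $d$ there exists a linear map $\mathcal{N}$ such that $\mathcal{N}(\rho^{\otimes d})=f(\rho)$. If $f$ is Hermitian-preserving and $f(\mathbf{1})\propto\mathbf{1}$, then $\mathcal{N}$ can also be chosen Hermitian-preserving with $\mathcal{N}(\mathbf{1}^{\otimes d})\propto\mathbf{1}$.
   Context: A polynomial of degree $d$ in the (density) operator $\rho$ on a finite-dimensional Hilbert space means a finite sum $f(\rho)=\sum_j A^{(j)}_{s_j}\rho A^{(j)}_{s_j-1}\rho\cdots A^{(j)}_1\rho A^{(j)}_0$ with fixed operator coefficients $A_i^{(j)}$ and $s_j\le d$. *)

(* Defs.v *)
(* Operators on the Hilbert space C^n are n x n matrices over
   an algebraically closed numeric field C (e.g. algC, or complex R). *)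
From HB Require Import structures.
From mathcomp Require Import all_boot all_order all_algebra.
From mathcomp Require Import mxtens.
Set Implicit Arguments. Unset Strict Implicit. Unset Printing Implicit Defensive.
Import Order.TTheory GRing.Theory Num.Theory.
Local Open Scope ring_scope.

Section Defs.
Variable C : numClosedFieldType.

Definition adjmx m n (A : 'M[C]_(m, n)) : 'M[C]_(n, m) := (map_mx Num.conj A)^T.

Definition hermitian_op n (A : 'M[C]_n) : Prop := adjmx A = A.

Definition psd n (A : 'M[C]_n) : Prop :=
  hermitian_op A /\ forall v : 'cV[C]_n, 0 <= (adjmx v *m A *m v) 0 0.

Definition density n (rho : 'M[C]_n) : Prop := psd rho /\ \tr rho = 1.

(* A monomial term  A_s rho A_{s-1} rho ... A_1 rho A_0  is encoded by the pair
   (A_0, [:: A_1; ...; A_s]); its degree s is the length of the list. *)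
Definition term n := ('M[C]_n * seq 'M[C]_n)%type.

Definition term_deg n (t : term n) : nat := size t.2.

Definition term_eval n (t : term n) (rho : 'M[C]_n) : 'M[C]_n :=
  foldl (fun acc A => A *m rho *m acc) t.1 t.2.

Definition poly_eval n (f : seq (term n)) (rho : 'M[C]_n) : 'M[C]_n :=
  \sum_(t <- f) term_eval t rho.

Definition poly_deg_le n (f : seq (term n)) (d : nat) : Prop :=
  all (fun t => term_deg t <= d)%N f.

Definition tpow n (rho : 'M[C]_n) (d : nat) : 'M[C]_(n ^ d) := ntensmx rho d.

End Defs.

(* Main.v *)
Require Import Defs.
From HB Require Import structures.
From mathcomp Require Import all_boot all_order all_algebra mxtens.
From mathcomp Require Import ring.
Import Order.TTheory GRing.Theory Num.Theory.
Local Open Scope ring_scope.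
Set Implicit Arguments. Unset Strict Implicit. Unset Printing Implicit Defensive.
Definition mkLin {C : numClosedFieldType} {m1 n1 m2 n2} {f : 'M[C]_(m1,n1) -> 'M[C]_(m2,n2)} (H : linear f) : {linear 'M[C]_(m1,n1) -> 'M[C]_(m2,n2)} := HB.pack f (GRing.isLinear.Build _ _ _ _ f H).
Lemma mkLinE (C : numClosedFieldType) m1 n1 m2 n2 f H X : @mkLin C m1 n1 m2 n2 f H X = f X.
Proof. by []. Qed.

Section Rep.
Variables (C : numClosedFieldType) (n : nat).

Definition rep k (g : 'M[C]_n -> 'M[C]_n) :=
  exists N : {linear 'M[C]_(n ^ k) -> 'M[C]_n},
    forall rho : 'M[C]_n, \tr rho = 1 -> N (tpow rho k) = g rho.

Definition blk {m} (i j : 'I_n) (X : 'M[C]_(n * m)) : 'M[C]_m :=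
  \matrix_(k, l) X (mxtens_index (i, k)) (mxtens_index (j, l)).

Lemma blk_tens m i j (A : 'M[C]_n) (B : 'M[C]_m) : blk i j (A *t B) = A i j *: B.
Proof. by apply/matrixP => k l; rewrite mxE tensmxE mxE. Qed.

Lemma blk_lin m i j a (X Y : 'M[C]_(n * m)) :
  blk i j (a *: X + Y) = a *: blk i j X + blk i j Y.
Proof. by apply/matrixP => k l; rewrite !mxE. Qed.

Lemma sc3 p q r (A : 'M[C]_(p,q)) (B : 'M[C]_q) (E : 'M[C]_(q,r)) c :
  A *m (c *: B) *m E = c *: (A *m B *m E).
Proof. by rewrite -scalemxAr -scalemxAl. Qed.

Lemma sc3r p q r (A : 'M[C]_(p,q)) (B : 'M[C]_q) (E : 'M[C]_(q,r)) c :
  A *m B *m (c *: E) = c *: (A *m B *m E).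
Proof. by rewrite scalemxAr. Qed.

Lemma rep0 A : rep 0 (fun _ => A).
Proof.
have lin : linear (fun X : 'M[C]_(n ^ 0) => X 0 0 *: A).
  by move=> a X Y /=; rewrite !mxE scalerDl scalerA.
by exists (mkLin lin) => rho _; rewrite mkLinE /tpow ntensmx0 mxE eqxx scale1r.
Qed.

Lemma rep_add k g1 g2 : rep k g1 -> rep k g2 -> rep k (fun r => g1 r + g2 r).
Proof.
move=> [N1 H1] [N2 H2].
have lin : linear (fun X => N1 X + N2 X).
  by move=> a X Y /=; rewrite !linearP scalerDr addrACA.
by exists (mkLin lin) => rho Hr; rewrite mkLinE H1 // H2.
Qed.

Lemma rep_zero k : rep k (fun _ => 0).
Proof.
have lin : linear (fun X : 'M[C]_(n ^ k) => (0 : 'M[C]_n)).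
  by move=> a X Y /=; rewrite scaler0 addr0.
by exists (mkLin lin).
Qed.

Lemma rep_step k g A : rep k g -> rep k.+1 (fun r => A *m r *m g r).
Proof.
case: k => [|k] [N HN].
  have lin : linear (fun X : 'M[C]_n => A *m X *m N 1).
    by move=> a X Y /=; rewrite mulmxDr mulmxDl sc3.
  by exists (mkLin lin) => rho Hr; rewrite mkLinE -HN.
have lin : linear (fun X : 'M[C]_(n * n ^ k.+1) =>
   \sum_i \sum_j A *m delta_mx i j *m N (blk i j X)).
  move=> a X Y /=; rewrite scaler_sumr -big_split; apply: eq_bigr => i _.
  rewrite scaler_sumr -big_split; apply: eq_bigr => j _.
  by rewrite blk_lin linearP mulmxDr scalemxAr.
exists (mkLin lin) => rho Hr; rewrite mkLinE -HN //.
have -> : tpow rho k.+2 = rho *t tpow rho k.+1 by [].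
under eq_bigr do under eq_bigr do rewrite blk_tens linearZ /= sc3r.
rewrite {3}(matrix_sum_delta rho) mulmx_sumr mulmx_suml; apply: eq_bigr => i _.
by rewrite mulmx_sumr mulmx_suml; apply: eq_bigr => j _; rewrite sc3.
Qed.

Lemma rep_raise k g : rep k g -> rep k.+1 g.
Proof.
case: k => [|k] [N HN].
  have lin : linear (fun X : 'M[C]_n => \tr X *: N 1).
    by move=> a X Y /=; rewrite linearP scalerDl scalerA.
  by exists (mkLin lin) => rho Hr; rewrite mkLinE -HN // Hr scale1r.
have lin : linear (fun X : 'M[C]_(n * n ^ k.+1) => N (\sum_i blk i i X)).
  move=> a X Y /=; rewrite -linearP; congr (N _).
  by rewrite scaler_sumr -big_split; apply: eq_bigr => i _; rewrite blk_lin.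
exists (mkLin lin) => rho Hr; rewrite mkLinE -HN //.
have -> : tpow rho k.+2 = rho *t tpow rho k.+1 by [].
under eq_bigr do rewrite blk_tens.
by rewrite -scaler_suml -/(\tr rho) Hr scale1r.
Qed.


Lemma rep_le k d g : (k <= d)%N -> rep k g -> rep d g.
Proof.
elim: d => [|d IH]; first by rewrite leqn0 => /eqP ->.
rewrite leq_eqVlt => /orP [/eqP -> //|]; rewrite ltnS => Hk Hr.
exact/rep_raise/IH.
Qed.

Lemma rep_foldl l k g : rep k g ->
  rep (k + size l) (fun r => foldl (fun acc A => A *m r *m acc) (g r) l).
Proof.
elim: l k g => [|A l IH] k g Hg /=; first by rewrite addn0.
rewrite addnS -addSn; exact: (IH _ _ (rep_step A Hg)).
Qed.

Lemma rep_poly (f : seq (term C n)) d : poly_deg_le f d -> rep d (poly_eval f).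
Proof.
rewrite /poly_deg_le /poly_eval; elim: f => [|t f IH] /=.
  move=> _; have [N HN] := rep_zero d.
  by exists N => rho Hr; rewrite HN // big_nil.
move=> /andP [Ht Hf].
have Ht' : rep d (term_eval t).
  apply: (rep_le Ht); have := rep_foldl t.2 (rep0 t.1).
  by rewrite add0n.
have [N HN] := rep_add Ht' (IH Hf).
by exists N => rho Hr; rewrite HN // big_cons.
Qed.

End Rep.

Section Adj.
Variable C : numClosedFieldType.

Lemma adjmxK m p (A : 'M[C]_(m,p)) : adjmx (adjmx A) = A.
Proof. by apply/matrixP => i j; rewrite !mxE conjCK. Qed.

Lemma adjmx_lin m p a (X Y : 'M[C]_(m,p)) :
  adjmx (a *: X + Y) = a^* *: adjmx X + adjmx Y.
Proof. by apply/matrixP => i j; rewrite !mxE rmorphD rmorphM. Qed.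

Lemma adjmxZ m p a (X : 'M[C]_(m,p)) : adjmx (a *: X) = a^* *: adjmx X.
Proof. by apply/matrixP => i j; rewrite !mxE rmorphM. Qed.

Lemma adjmxD m p (X Y : 'M[C]_(m,p)) : adjmx (X + Y) = adjmx X + adjmx Y.
Proof. by apply/matrixP => i j; rewrite !mxE rmorphD. Qed.

Lemma adjmx_tens m p q r (A : 'M[C]_(m,p)) (B : 'M[C]_(q,r)) :
  adjmx (A *t B) = adjmx A *t adjmx B.
Proof. by apply/matrixP => i j; rewrite !mxE rmorphM. Qed.

Lemma tens_scale m p q r c (A : 'M[C]_(m,p)) (B : 'M[C]_(q,r)) :
  (c *: A) *t B = c *: (A *t B).
Proof. by apply/matrixP => i j; rewrite !mxE mulrA. Qed.

Lemma tens_scaler m p q r c (A : 'M[C]_(m,p)) (B : 'M[C]_(q,r)) :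
  A *t (c *: B) = c *: (A *t B).
Proof. by apply/matrixP => i j; rewrite !mxE mulrCA. Qed.

Lemma tpow_herm n (rho : 'M[C]_n) d : hermitian_op rho -> hermitian_op (tpow rho d).
Proof.
rewrite /hermitian_op /tpow => H; case: d => [|d].
  by apply/matrixP => i j; rewrite !mxE conjC_nat eq_sym.
rewrite /ntensmx; elim: d => [//|d IH] /=.
by rewrite adjmx_tens H IH.
Qed.

Lemma tpow_scale n (rho : 'M[C]_n) c d : tpow (c *: rho) d = c ^+ d *: tpow rho d.
Proof.
rewrite /tpow; case: d => [|d]; first by rewrite expr0 scale1r.
rewrite /ntensmx; elim: d => [|d IH] /=; first by rewrite expr1.
by rewrite IH tens_scale tens_scaler scalerA -!exprS.
Qed.

End Adj.

Theorem lemma2 (C : numClosedFieldType) (n d : nat) (f : seq (term C n)) :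
  poly_deg_le f d ->
  (* part 1 *)
  (exists N : {linear 'M[C]_(n ^ d) -> 'M[C]_n},
     forall rho : 'M[C]_n, density rho -> N (tpow rho d) = poly_eval f rho) /\
  (* part 2 *)
  ((forall X : 'M[C]_n, hermitian_op X -> hermitian_op (poly_eval f X)) ->
   (exists c : C, poly_eval f (n%:R^-1 *: (1 : 'M[C]_n)) = c *: (1 : 'M[C]_n)) ->
   exists N : {linear 'M[C]_(n ^ d) -> 'M[C]_n},
     (forall rho : 'M[C]_n, density rho -> N (tpow rho d) = poly_eval f rho) /\
     (forall X : 'M[C]_(n ^ d), hermitian_op X -> hermitian_op (N X)) /\
     (exists c : C, N (tpow (1 : 'M[C]_n) d) = c *: (1 : 'M[C]_n))).
Proof.
move=> Hf; have [N HN] := rep_poly Hf.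
split; first by exists N => rho [_ Htr]; exact: HN.
move=> Hherm [c Hc].
have two0 : (2 : C) != 0 by rewrite pnatr_eq0.
have half : forall x : 'M[C]_n, 2^-1 *: (x + x) = x.
  move=> x; rewrite -[x in x + _]scale1r -[x in _ + x]scale1r -scalerDl scalerA.
  by rewrite mulVf ?scale1r.
have lin : linear (fun X : 'M[C]_(n ^ d) => 2^-1 *: (N X + adjmx (N (adjmx X)))).
  move=> a X Y /=; rewrite adjmx_lin !linearP adjmx_lin conjCK.
  by apply/matrixP => i j; rewrite !mxE; ring.
have Hd : forall rho, density rho -> mkLin lin (tpow rho d) = poly_eval f rho.
  move=> rho [[Hrh _] Htr]; rewrite mkLinE (tpow_herm d Hrh) HN //.
  by rewrite (Hherm _ Hrh) half.
exists (mkLin lin); split => //; split.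
  move=> X HX; rewrite /hermitian_op mkLinE.
  by rewrite adjmxZ adjmxD adjmxK HX fmorphV rmorph_nat addrC.
destruct n as [|n'].
  by exists 0; apply/matrixP => [[]].
set rho0 : 'M[C]_n'.+1 := n'.+1%:R^-1 *: 1.
have n0 : (n'.+1%:R : C) != 0 by rewrite pnatr_eq0.
have Drho : rho0 \is a GRing.unit -> True by [].
have dens : density rho0.
  split; last by rewrite /rho0 mxtraceZ mxtrace1 mulVf.
  split.
    by apply/matrixP => i j; rewrite !mxE rmorphM fmorphV !rmorph_nat eq_sym.
  move=> v; rewrite /rho0 sc3 mulmx1 mxE.
  apply: mulr_ge0; first by rewrite invr_ge0 ler0n.
  by rewrite mxE; apply: sumr_ge0 => i _; rewrite !mxE mulrC mul_conjC_ge0.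
have E1 : tpow (1 : 'M[C]_n'.+1) d = n'.+1%:R ^+ d *: tpow rho0 d.
  rewrite -tpow_scale; congr (tpow _ d).
  by rewrite /rho0 scalerA divff ?scale1r.
exists (n'.+1%:R ^+ d * c).
by rewrite E1 linearZ_LR Hd // Hc scalerA.
Qed.
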